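(* Let $q$ be an odd prime, let $g$ be a primitive root modulo $q$, let $\omega=e^{2\pi i/(q-1)}$, and let $\chi_g$ be the Dirichlet character modulo $q$ with $\chi_g(n)=\omega^{\mathrm{ind}_g(n)}$ if $q\nmid n$ and $\chi_g(n)=0$ otherwise, where $\mathrm{ind}_g(n)$ is defined modulo $q-1$ by $n\equiv g^{\mathrm{ind}_g(n)}\pmod q$. For $1\le r\le q-2$ put $$C(q,r,\chi_g)=\prod_{p:\ \chi_g(p)=\omega^r}\Big(1-\frac{1}{p^{(q-1)/(r,q-1)}}\Big),$$ the product over all primes $p$ with $\chi_g(p)=\omega^r$, where $(r,q-1)$ denotes the greatest common divisor, and define $$C(q)=\prod_{r=1}^{q-2}C(q,r,\chi_g)^{(r,q-1)}.$$ For a prime $p\ne q$ let $f_p$ be the smallest integer $k\ge 1$ with $p^k\equiv 1\pmod q$. Then $$C(q)=\prod_{p\neq q,\ f_p\ge 2}\Big(1-\frac{1}{p^{f_p}}\Big)^{\frac{q-1}{f_p}}.$$ *)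

(* Defs.v *)
From HB Require Import structures.
From mathcomp Require Import all_boot all_order all_algebra.
From mathcomp Require Import all_classical all_reals all_analysis.
From mathcomp Require Import complex.
Set Implicit Arguments. Unset Strict Implicit. Unset Printing Implicit Defensive.
Import Order.TTheory GRing.Theory Num.Theory.
Local Open Scope ring_scope.

Definition primitive_root (q g : nat) : Prop :=
  (g %% q != 0)%N /\ forall k : nat, (0 < k < q.-1)%N -> (g ^ k %% q != 1)%N.

(* ind_g(n): the least k in {0,...,q-2} with g^k = n (mod q); for q not dividing n
   and g a primitive root this is a representative of ind_g(n) mod (q-1). *)
Definition ind (q g n : nat) : nat :=
  find (fun k => g ^ k %% q == n %% q)%N (iota 0 q.-1).

Definition omega (R : realType) (q : nat) : R[i] :=
  (cos (2 * pi / (q.-1)%:R) +i* sin (2 * pi / (q.-1)%:R))%C.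

Definition chi (R : realType) (q g n : nat) : R[i] :=
  if (q %| n)%N then 0 else omega R q ^+ ind q g n.

Definition Cqr_partial (R : realType) (q g r : nat) (N : nat) : R :=
  \prod_(p < N.+1 | prime p && (chi R q g p == omega R q ^+ r))
     (1 - ((p%:R : R) ^+ (q.-1 %/ gcdn r q.-1))^-1).

(* f_p: smallest k >= 1 with p^k = 1 (mod q) (searched among 1..q; for a prime
   p <> q such a k <= q-1 exists by Fermat, so this is the true minimum). *)
Definition fp (q p : nat) : nat :=
  (find (fun k => p ^ k.+1 %% q == 1)%N (iota 0 q)).+1.

Definition RHS_partial (R : realType) (q : nat) (N : nat) : R :=
  \prod_(p < N.+1 | prime p && (val p != q) && (2 <= fp q p)%N)
     (1 - ((p%:R : R) ^+ fp q p)^-1) ^+ (q.-1 %/ fp q p).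

(* Main.v *)
Require Import Defs.
From HB Require Import structures.
From mathcomp Require Import all_boot all_order all_algebra.
From mathcomp Require Import all_classical all_reals all_analysis.
From mathcomp Require Import complex.
From mathcomp Require Import ring lra zify.
From mathcomp Require cyclic.
Import Order.TTheory GRing.Theory Num.Theory numFieldNormedType.Exports.
Local Open Scope classical_set_scope.
Local Open Scope ring_scope.

Lemma demoivre (R : realType) (t : R) (k : nat) :
  ((cos t +i* sin t)%C ^+ k = (cos (t *+ k) +i* sin (t *+ k))%C).
Proof.
elim: k => [|k IH]; first by rewrite expr0 !mulr0n cos0 sin0.
rewrite exprS IH mulrS cosD sinD.
simpl. congr (_ +i* _)%C; lra.
Qed.

Lemma cos_ne1 (R : realType) (x : R) : 0 < x < pi *+ 2 -> cos x != 1.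
Proof.
move=> /andP[x0 x2].
have -> : x = x / 2 + x / 2 by field.
rewrite cosD.
have h : 0 < sin (x / 2).
  apply: sin_gt0_pi; apply/andP; split; first lra.
  rewrite mulr2n in x2; lra.
have := cos2Dsin2 (x/2).
nra.
Qed.

Lemma omega_exp (R : realType) q k : omega R q ^+ k =
  (cos ((2 * pi / (q.-1)%:R) *+ k) +i* sin ((2 * pi / (q.-1)%:R) *+ k))%C.
Proof. by rewrite /omega demoivre. Qed.

Lemma omega_neq0 (R : realType) q : omega R q != 0.
Proof.
apply/negP => /eqP H.
have := cos2Dsin2 (2 * pi / (q.-1)%:R : R).
move: H; rewrite /omega => -[-> ->]; rewrite expr0n /= add0r => /eqP.
by rewrite eq_sym oner_eq0.
Qed.

Lemma omega_ne1 (R : realType) q d : (0 < d < q.-1)%N -> omega R q ^+ d != 1.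
Proof.
move=> /andP[d0 dn]; rewrite omega_exp; apply/negP => /eqP [] /eqP.
move=> H _; move: H; apply/negP; apply: cos_ne1.
have n0 : (0 < q.-1)%N by apply: leq_trans dn.
have n0R : (0 : R) < (q.-1)%:R by rewrite ltr0n.
have dn' : (d%:R : R) < (q.-1)%:R by rewrite ltr_nat.
have d0' : (0:R) < d%:R by rewrite ltr0n.
have f1 : (d%:R / (q.-1)%:R : R) < 1 by rewrite ltr_pdivrMr // mul1r.
have f0 : (0:R) < (d%:R / (q.-1)%:R) by apply: divr_gt0.
have -> : (2 * pi / (q.-1)%:R *+ d : R) = 2 * pi * (d%:R / (q.-1)%:R).
  by rewrite -mulr_natr; field; rewrite gt_eqF.
have := pi_gt0 R; rewrite mulr2n => hp.
apply/andP; split; nra.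
Qed.

Lemma omega_inj (R : realType) q a b : (a < q.-1)%N -> (b < q.-1)%N ->
  (omega R q ^+ a == omega R q ^+ b) = (a == b).
Proof.
wlog ab : a b / (a <= b)%N.
  move=> W ha hb; case: (leqP a b) => h; first exact: W.
  by rewrite eq_sym W // 1?ltnW // eq_sym.
move=> ha hb; apply/eqP/eqP => [E|->//].
apply/eqP; rewrite eqn_leq ab /=; rewrite leqNgt; apply/negP => lt.
have : omega R q ^+ (b - a) == 1.
  have E' : 1 * omega R q ^+ a = omega R q ^+ (b - a) * omega R q ^+ a.
    by rewrite mul1r -exprD subnK.
  by move/(mulIf (expf_neq0 _ (omega_neq0 R q))) : E' => <-.
rewrite (negbTE (@omega_ne1 R q (b - a) _)) // subn_gt0 lt /=; apply: leq_ltn_trans hb; apply: leq_subr.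
Qed.

Section NatPart.
Local Open Scope nat_scope.
Lemma gcd_div_coprime k n : 0 < n -> coprime (k %/ gcdn k n) (n %/ gcdn k n).
Proof.
move=> n0; have e0 : 0 < gcdn k n by rewrite gcdn_gt0 n0 orbT.
rewrite /coprime; apply/eqP.
have := muln_gcdl (k %/ gcdn k n) (n %/ gcdn k n) (gcdn k n).
rewrite !divnK ?dvdn_gcdl ?dvdn_gcdr //.
set a := gcdn (k %/ _) _; set e := gcdn k n => H.
by apply/eqP; rewrite -(eqn_pmul2r e0) H mul1n.
Qed.

Lemma dvd_mul_gcd k n j : 0 < n -> (n %| k * j) -> (n %/ gcdn k n %| j).
Proof.
move=> n0; set e := gcdn k n.
have e0 : 0 < e by rewrite gcdn_gt0 n0 orbT.
move=> H.
have Hn : n %/ e * e = n by rewrite divnK // dvdn_gcdr.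
have Hk : k %/ e * e = k by rewrite divnK // dvdn_gcdl.
have H' : n %/ e * e %| k %/ e * j * e by rewrite Hn mulnAC Hk.
move: H'; rewrite dvdn_pmul2r // Gauss_dvdr // coprime_sym; exact: gcd_div_coprime.
Qed.

Lemma dvd_mul_div_gcd k n : n %| k * (n %/ gcdn k n).
Proof.
by rewrite muln_divCA_gcd dvdn_mulr.
Qed.

Section NT.
Variables (q g : nat).
Hypotheses (qp : prime q) (q3 : 2 < q) (pr : primitive_root q g).
Let n := q.-1.

Lemma n_gt0 : 0 < n. Proof. rewrite /n; lia. Qed.

Lemma g_coprime : coprime g q.
Proof. by rewrite coprime_sym prime_coprime //; case: pr. Qed.

Lemma fermat_g : g ^ n = 1 %[mod q].
Proof. by rewrite /n -totient_prime // cyclic.Euler_exp_totient // g_coprime. Qed.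

Lemma g_pow_mod m : (g ^ m %% q == 1) = (n %| m).
Proof.
have Hm : g ^ m = g ^ (m %% n) %[mod q].
  have -> : g ^ m = (g ^ n) ^ (m %/ n) * g ^ (m %% n)
    by rewrite -expnM -expnD mulnC -divn_eq.
  by rewrite -modnMml -modnXm fermat_g modnXm exp1n modnMml mul1n.
rewrite Hm /dvdn; case: (posnP (m %% n)) => [->|h].
  by rewrite expn0 modn_small ?eqxx //; lia.
apply/negbTE; case: pr => _ /(_ (m %% n)); apply.
by rewrite h ltn_pmod // n_gt0.
Qed.

Lemma g_inj a b : a < n -> b < n -> g ^ a %% q = g ^ b %% q -> a = b.
Proof.
wlog ab : a b / a <= b.
  move=> W ha hb E; case: (leqP a b) => h; first exact: W.
  by apply/esym/W => //; apply: ltnW.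
move=> ha hb E; apply/eqP; rewrite eqn_leq ab /= leqNgt; apply/negP => lt.
have : g ^ (a + (n - b)) %% q == 1.
  rewrite expnD -modnMml E modnMml -expnD subnKC; last by apply: ltnW.
  by rewrite g_pow_mod.
rewrite g_pow_mod /dvdn modn_small; last by lia.
by lia.
Qed.

Lemma g_surj x : ~~ (q %| x) -> exists2 k, k < n & g ^ k %% q = x %% q.
Proof.
move=> qx.
set s := [seq g ^ k %% q | k <- iota 0 n].
have us : uniq s.
  rewrite map_inj_in_uniq ?iota_uniq // => a b; rewrite !mem_iota => ha hb.
  by apply: g_inj; lia.
have ss : {subset s <= iota 1 n}.
  move=> y /mapP [k _ ->]; rewrite mem_iota.
  have h1 : g ^ k %% q != 0.
    rewrite -/(dvdn q (g ^ k)) Euclid_dvdX // negb_and.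
    by case: pr => h _; rewrite /dvdn h.
  have h2 : g ^ k %% q < q by rewrite ltn_pmod //; lia.
  rewrite /n; lia.
have szs : size (iota 1 n) <= size s by rewrite size_map !size_iota.
have [_ eqs] := uniq_min_size us ss szs.
have : x %% q \in s.
  rewrite eqs mem_iota.
  have h2 : x %% q < q by rewrite ltn_pmod //; lia.
  have h1 : x %% q != 0 by [].
  rewrite /n; lia.
case/mapP => k; rewrite mem_iota => hk ->; exists k => //; lia.
Qed.

Lemma find_exact (P : pred nat) m M : m < M -> P m ->
  (forall j, j < m -> ~~ P j) -> find P (iota 0 M) = m.
Proof.
move=> mM Pm H.
have hs : has P (iota 0 M) by apply/hasP; exists m; rewrite // mem_iota; lia.
apply/eqP; rewrite eqn_leq; apply/andP; split.
  rewrite leqNgt; apply/negP => lt.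
  by have := before_find 0 lt; rewrite nth_iota // add0n Pm.
rewrite leqNgt; apply/negP => lt.
have := nth_find 0 hs; rewrite nth_iota; last by move: hs; rewrite has_find size_iota.
by rewrite add0n (negbTE (H _ lt)).
Qed.

Lemma ind_spec x : ~~ (q %| x) -> ind q g x < n /\ g ^ (ind q g x) %% q = x %% q.
Proof.
move=> qx; have [k kn Ek] := @g_surj x qx.
have hs : has (fun k => g ^ k %% q == x %% q) (iota 0 n).
  by apply/hasP; exists k; rewrite ?mem_iota ?Ek //; lia.
have lt : ind q g x < n by move: hs; rewrite has_find size_iota.
split => //; apply/eqP; have := nth_find 0 hs; rewrite nth_iota //.
Qed.

Lemma not_dvd_prime p : prime p -> p != q -> ~~ (q %| p).
Proof. by move=> pp pq; rewrite dvdn_prime2 // eq_sym. Qed.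

Lemma fp_spec p : prime p -> p != q -> fp q p = n %/ gcdn (ind q g p) n.
Proof.
move=> pp pq; have qp' := @not_dvd_prime p pp pq.
have [kn Ek] := @ind_spec p qp'; set k := ind q g p in kn Ek *.
have Hj j : (p ^ j %% q == 1) = (n %| k * j).
  by rewrite -modnXm -Ek modnXm -expnM g_pow_mod.
set d := n %/ gcdn k n.
have e0 : 0 < gcdn k n by rewrite gcdn_gt0 n_gt0 orbT.
have en : gcdn k n <= n by apply: dvdn_leq; [apply: n_gt0| apply: dvdn_gcdr].
have d0 : 0 < d by rewrite divn_gt0.
have dn : d <= n by rewrite /d; apply: leq_div.
rewrite /fp (@find_exact _ d.-1).
- by rewrite prednK.
- rewrite /n in dn; lia.
- by rewrite /= prednK // Hj dvd_mul_div_gcd.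
- move=> j lt; rewrite /= Hj; apply/negP => /(@dvd_mul_gcd k n j.+1 n_gt0) => /dvdn_leq.
  by move=> /(_ isT); rewrite -/d; lia.
Qed.
End NT.
End NatPart.
Lemma chi_prime R q g p : prime q -> (2 < q)%N -> primitive_root q g ->
  prime p -> p != q -> chi R q g p = omega R q ^+ ind q g p.
Proof.
by move=> qp q3 pr pp pq; rewrite /chi (negbTE (@not_dvd_prime q qp p pp pq)).
Qed.

Lemma ident R q g : prime q -> (2 < q)%N -> primitive_root q g -> forall N,
  RHS_partial R q N = \prod_(1 <= r < q.-1) Cqr_partial R q g r N ^+ gcdn r q.-1.
Proof.
move=> qp q3 pr N.
rewrite /RHS_partial /Cqr_partial.
under eq_bigr => r _ do rewrite -prodrXl big_mkcond /=.
rewrite exchange_big /= big_mkcond /=.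
apply: eq_bigr => p _.
case pp: (prime p) => /=; last by rewrite big1.
case: (eqVneq (p : nat) q) => [pq|pq] /=.
  rewrite big1 // => r _; rewrite pq /chi dvdnn eq_sym expf_eq0.
  by rewrite (negbTE (omega_neq0 _ _)) andbF.
rewrite chi_prime //.
have [kn _] := @ind_spec q g qp q3 pr p (@not_dvd_prime q qp p pp pq).
rewrite (@fp_spec q g qp q3 pr p pp pq).
set k := ind q g p in kn *; set n := q.-1 in kn *.
have n0 : (0 < n)%N by rewrite /n; lia.
have e0 : (0 < gcdn k n)%N by rewrite gcdn_gt0 n0 orbT.
have Hn : (n %/ gcdn k n * gcdn k n = n)%N by rewrite divnK // dvdn_gcdr.
case: (posnP k) => [k0|kpos].
  rewrite k0 gcd0n divnn n0 /=.
  rewrite big1_seq // => r; rewrite mem_index_iota => /andP[r1 rn].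
  by rewrite omega_inj //; case: r r1 rn.
have ek : (gcdn k n <= k)%N by apply: dvdn_leq => //; apply: dvdn_gcdl.
have -> : (2 <= n %/ gcdn k n)%N by nia.
rewrite (bigD1_seq k) /= ?iota_uniq ?mem_index_iota ?kpos //.
rewrite eqxx big1_seq ?mulr1; last first.
  move=> r /andP[rk]; rewrite mem_index_iota => /andP[r1 rn].
  by rewrite omega_inj // eq_sym (negbTE rk).
congr (_ ^+ _).
set d := (n %/ gcdn k n)%N.
by rewrite -{1}Hn -/d mulKn // divn_gt0 // dvdn_leq // dvdn_gcdr.
Qed.

Lemma factor_bnd (R : realType) (p m : nat) : (0 < p)%N ->
  0 <= 1 - ((p%:R : R) ^+ m)^-1 <= 1.
Proof.
move=> p0.
have x1 : (1 : R) <= p%:R ^+ m by rewrite exprn_ege1 // ler1n.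
have x0 : (0 : R) < p%:R ^+ m by lra.
have i0 : (0 : R) < (p%:R ^+ m)^-1 by rewrite invr_gt0.
have i1 : ((p%:R : R) ^+ m)^-1 <= 1 by rewrite invf_le1.
apply/andP; split; lra.
Qed.

Lemma Cqr_cvg (R : realType) q g r : cvgn (Cqr_partial R q g r).
Proof.
apply: cvgP; apply: nonincreasing_cvgn.
  apply/nonincreasing_seqP => N.
  rewrite /Cqr_partial [X in _ <= X]big_mkcond [X in X <= _]big_mkcond /=.
  rewrite big_ord_recr /=.
  set a := \prod_(i < N.+1) _; set b := if _ then _ else _.
  have a0 : 0 <= a.
    by apply: prodr_ge0 => i _; case: ifP => // /andP[/prime_gt0 h _]; case/andP: (@factor_bnd R _ (q.-1 %/ gcdn r q.-1) h).
  have b1 : b <= 1.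
    by rewrite /b; case: ifP => // /andP[/prime_gt0 h _]; case/andP: (@factor_bnd R _ (q.-1 %/ gcdn r q.-1) h).
  nra.
exists 0 => _ [N _ <-].
rewrite /Cqr_partial; apply: prodr_ge0 => i /andP[/prime_gt0 h _].
by case/andP: (@factor_bnd R _ (q.-1 %/ gcdn r q.-1) h).
Qed.

Lemma cvg_powseq (R : realType) (u : nat -> R) (l : R) e :
  u @ \oo --> l -> (fun N => u N ^+ e) @ \oo --> l ^+ e.
Proof.
move=> H; elim: e => [|e IH].
  under eq_fun do rewrite expr0; rewrite expr0; exact: cvg_cst.
under eq_fun do rewrite exprS; rewrite exprS.
exact: cvgM.
Qed.

Lemma cvg_prodseq (R : realType) (s : seq nat) (u : nat -> nat -> R) (l : nat -> R) (e : nat -> nat) :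
  (forall r, r \in s -> u r @ \oo --> l r) ->
  (fun N => \prod_(r <- s) u r N ^+ e r) @ \oo --> \prod_(r <- s) l r ^+ e r.
Proof.
elim: s => [|a s IH] H.
  under eq_fun do rewrite big_nil; rewrite big_nil; exact: cvg_cst.
under eq_fun do rewrite big_cons; rewrite big_cons.
apply: cvgM; first by apply: cvg_powseq; apply: H; rewrite inE eqxx.
by apply: IH => r rs; apply: H; rewrite inE rs orbT.
Qed.

Theorem proposition1 (R : realType) (q g : nat) :
  prime q -> odd q -> primitive_root q g ->
  exists C : nat -> R,
    (forall r : nat, (1 <= r <= q - 2)%N ->
       Cqr_partial R q g r @ \oo --> C r) /\
    RHS_partial R q @ \oo --> \prod_(1 <= r < q.-1) C r ^+ gcdn r q.-1.
Proof.
move=> qp qodd pr.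
have q3 : (2 < q)%N.
  have := prime_gt1 qp; case: q qp qodd {pr} => [|[|[|q']]] //.
exists (fun r => limn (Cqr_partial R q g r)); split.
  by move=> r _; exact: Cqr_cvg.
have -> : RHS_partial R q = (fun N => \prod_(1 <= r < q.-1) Cqr_partial R q g r N ^+ gcdn r q.-1).
  by apply: funext => N; rewrite (@ident R q g qp q3 pr).
apply: cvg_prodseq => r _; exact: Cqr_cvg.
Qed.
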